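(* For any $\varepsilon\in(0,1)$ there exists an infinite $\varepsilon$-synchronization string over an alphabet of size $\Theta(1/\varepsilon^4)$, i.e., an infinite sequence $S=s_1s_2s_3\cdots$ over such an alphabet with $\mathrm{ED}(S[i,j),S[j,k))>(1-\varepsilon)(k-i)$ for all positive integers $i<j<k$.
   Context: $\mathrm{ED}$ is the minimum number of insertions and deletions transforming one string into another. $S[i,j)$ denotes the consecutive substring $s_i s_{i+1}\cdots s_{j-1}$. *)

(* Defs.v *)
From HB Require Import structures.
From mathcomp Require Import all_boot all_order all_algebra.
From mathcomp Require Import boolp reals.
Set Implicit Arguments. Unset Strict Implicit. Unset Printing Implicit Defensive.
Import Order.TTheory GRing.Theory Num.Theory.

Inductive edit_op (T : Type) := Ins of nat & T | Del of nat.

Definition apply_op (T : Type) (o : edit_op T) (s : seq T) : seq T :=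
  match o with
  | Ins i a => take i s ++ a :: drop i s
  | Del i => take i s ++ drop i.+1 s
  end.

Definition apply_ops (T : Type) (ops : seq (edit_op T)) (s : seq T) : seq T :=
  foldl (fun u o => apply_op o u) s ops.

Lemma ED_exists (T : Type) (s t : seq T) :
  exists n, `[< exists ops : seq (edit_op T), size ops = n /\ apply_ops ops s = t >].
Proof.
exists (size s + size t); apply/asboolP.
exists (nseq (size s) (Del T 0) ++ map (fun a => Ins 0 a) (rev t)).
split; first by rewrite size_cat size_nseq size_map size_rev.
rewrite /apply_ops foldl_cat.
have -> : foldl (fun u o => apply_op o u) s (nseq (size s) (Del T 0)) = [::].
  by elim: s => //= a s IH; rewrite drop0.
have H : forall u, foldl (fun u o => apply_op o u) u
                      (map (fun a => Ins 0 a) (rev t)) = t ++ u.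
  elim: t => //= x t IH u.
  by rewrite rev_cons map_rcons foldl_rcons IH /= take0 drop0.
by rewrite H cats0.
Qed.

Definition ED (T : Type) (s t : seq T) : nat := ex_minn (ED_exists s t).

(* S[i,j) = s_i s_(i+1) ... s_(j-1) for an infinite string S = s_1 s_2 ...,
   represented as a function nat -> T where s_m = S m (S 0 is unused). *)
Definition substr (T : Type) (S : nat -> T) (i j : nat) : seq T :=
  [seq S m | m <- iota i (j - i)].

Local Open Scope ring_scope.

Definition inf_sync_string (R : realType) (eps : R) (T : Type) (S : nat -> T) :=
  forall i j k : nat, (0 < i)%N -> (i < j)%N -> (j < k)%N ->
    (1 - eps) * (k - i)%:R < (ED (substr S i j) (substr S j k))%:R.

(* Main.v *)
Require Import Defs.
From HB Require Import structures.
From mathcomp Require Import all_boot all_order all_algebra.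
From mathcomp Require Import boolp reals.
From mathcomp Require Import zify ring lra.
Import Order.TTheory GRing.Theory Num.Theory.
Set Implicit Arguments. Unset Strict Implicit. Unset Printing Implicit Defensive.

Section Words.
Variable T : finType.

Fixpoint words (n : nat) : seq (seq T) :=
  if n is n'.+1 then [seq x :: w | x <- enum T, w <- words n'] else [:: [::]].

Lemma mem_words n w : (w \in words n) = (size w == n).
Proof.
elim: n w => [|n IH] [|x w] //=.
- by apply/negbTE/allpairsP => -[[y v] [_ _]].
- apply/allpairsP/idP => [[[y v] [/= _ Hv [_ ->]]]|Hw]; first by rewrite /= eqSS -IH.
  by exists (x, w); rewrite /= mem_enum IH.
Qed.

Lemma sum_words_split (G : seq T -> seq T -> nat) m l :
  \sum_(u <- words (m + l)) G (take m u) (drop m u) =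
  \sum_(u1 <- words m) \sum_(u2 <- words l) G u1 u2.
Proof.
elim: m G => [|m IH] G.
  rewrite add0n big_cons big_nil addn0; apply: eq_bigr => u _.
  by rewrite take0 drop0.
rewrite addSn /= !big_allpairs_dep; apply: eq_bigr => x _ /=.
exact: (IH (fun a b => G (x :: a) b)).
Qed.

Lemma size_words n : size (words n) = #|T| ^ n.
Proof.
elim: n => [|n IH] //=; rewrite size_allpairs IH -cardE expnS //.
Qed.

Lemma sum_words_const n c : \sum_(u <- words n) c = #|T| ^ n * c.
Proof. by rewrite big_const_seq count_predT size_words iter_addn_0 mulnC. Qed.

End Words.

Lemma sum_ge_mem (I : eqType) (s : seq I) (F : I -> nat) x :
  x \in s -> F x <= \sum_(y <- s) F y.
Proof.
elim: s => [|y s IH] //; rewrite inE big_cons => /orP [/eqP ->|/IH H].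
  exact: leq_addr.
exact: leq_trans H (leq_addl _ _).
Qed.

Lemma has_le_sum (I : Type) (s : seq I) (p : pred I) :
  has p s <= \sum_(y <- s) p y.
Proof.
elim: s => [|y s IH] //=; rewrite big_cons.
by case: (p y) => //=; rewrite add0n.
Qed.

Lemma count_masks L j : \sum_(m <- words bool L) (count id m == j) = 'C(L, j).
Proof.
elim: L j => [|L IH] j.
  by rewrite /= big_cons big_nil addn0 bin0n eq_sym.
rewrite /= big_allpairs_dep /= big_enum /= big_bool /=.
case: j => [|j].
  rewrite bin0.
  under eq_bigr do rewrite add1n.
  rewrite big1 // add0n.
  under eq_bigr do rewrite add0n.
  by rewrite IH bin0.
under eq_bigr do rewrite add1n eqSS.
under [X in _ + X]eq_bigr do rewrite add0n.
by rewrite !IH binS addnC.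
Qed.

Lemma sum_enum_const (T : finType) c : \sum_(x <- enum T) c = #|T| * c.
Proof. by rewrite big_const_seq count_predT -cardE iter_addn_0 mulnC. Qed.

Lemma sum_eq_count (T : eqType) (s : seq T) y :
  \sum_(x <- s) (x == y) = count_mem y s.
Proof. by elim: s => [|x s IH]; rewrite ?big_nil ?big_cons //= IH. Qed.

Lemma sum_mask_eq (T : finType) (m : bitseq) (s : seq T) :
  \sum_(u <- words T (size m)) (mask m u == s) <= #|T| ^ (size m - count id m).
Proof.
elim: m s => [|b m IH] s.
  rewrite /= big_cons big_nil addn0 /=; by case: (_ == _).
rewrite /= big_allpairs_dep /=.
case: b => /=.
  rewrite add1n subSS.
  case: s => [|y s].
    by rewrite big1 // => x _; rewrite big1.
  rewrite (eq_bigr (fun x => (x == y) * \sum_(u <- words T (size m)) (mask m u == s))); last first.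
    move=> x _; rewrite big_distrr /=; apply: eq_bigr => u _.
    by rewrite eqseq_cons; case: (x == y); rewrite ?mul1n ?mul0n.
  rewrite -big_distrl /= sum_eq_count count_uniq_mem ?enum_uniq // mem_enum mul1n.
  exact: IH.
rewrite add0n.
apply: (@leq_trans (\sum_(x <- enum T) #|T| ^ (size m - count id m))).
  by apply: leq_sum => x _; exact: IH.
rewrite sum_enum_const -expnS subSn //; exact: count_size.
Qed.

Lemma sum_mask_sq (T : finType) (m : bitseq) k : count id m = 2 * k ->
  \sum_(u <- words T (size m)) (take k (mask m u) == drop k (mask m u))
    <= #|T| ^ (size m - k).
Proof.
move=> Hc.
have Hs := count_size id m; rewrite Hc in Hs.
apply: (@leq_trans (\sum_(u <- words T (size m))
           \sum_(c <- words T k) (mask m u == c ++ c))).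
  rewrite big_seq [X in _ <= X]big_seq; apply: leq_sum => u Hu.
  case: eqP => // Heq.
  have Hsz : size (mask m u) = 2 * k.
    by rewrite size_mask // -?Hc //; move: Hu; rewrite mem_words => /eqP.
  apply: (@leq_trans (mask m u == take k (mask m u) ++ take k (mask m u))).
    suff -> : mask m u == take k (mask m u) ++ take k (mask m u) by [].
    by apply/eqP; rewrite -{1}(cat_take_drop k (mask m u)) -Heq.
  apply: sum_ge_mem; rewrite mem_words size_take Hsz.
  by case: k Hc Hsz Hs {Heq} => // k; rewrite ltn_Pmull.
rewrite exchange_big /=.
apply: (@leq_trans (\sum_(c <- words T k) #|T| ^ (size m - count id m))).
  by apply: leq_sum => c _; exact: sum_mask_eq.
rewrite sum_words_const -expnD Hc.
by have -> : k + (size m - 2 * k) = size m - k by lia.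
Qed.

Section Bad.
Variable T : finType.
Variable N : nat.

Definition kL (L : nat) := ((L.-1) %/ (2 * N)).+1.

Definition bad (u : seq T) : bool :=
  has (fun m => (count id m == 2 * kL (size u)) &&
                (take (kL (size u)) (mask m u) == drop (kL (size u)) (mask m u)))
      (words bool (size u)).

Definition good (u : seq T) : bool :=
  all (fun j => all (fun i => ~~ bad (drop i (take j u))) (iota 0 j.+1))
      (iota 0 (size u).+1).

Lemma bad_nil : bad [::] = false.
Proof. by []. Qed.

Lemma goodP u : reflect (forall i j, ~~ bad (drop i (take j u))) (good u).
Proof.
apply: (iffP allP) => [H i j|H j _]; last by apply/allP => i _; exact: H.
have [Hj|Hj] := leqP j (size u); last first.
  rewrite take_oversize ?(ltnW Hj) //.
  have [Hi|Hi] := leqP i (size u); last first.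
    by rewrite drop_oversize ?(ltnW Hi) // bad_nil.
  have Hs : size u \in iota 0 (size u).+1 by rewrite mem_iota; lia.
  have := allP (H _ Hs) i; rewrite take_size; apply.
  by rewrite mem_iota; lia.
have [Hi|Hi] := leqP i j; last first.
  by rewrite drop_oversize // size_take_min; lia.
have Hs : j \in iota 0 (size u).+1 by rewrite mem_iota; lia.
have := allP (H _ Hs) i; apply.
by rewrite mem_iota; lia.
Qed.

Lemma good_take u j : good u -> good (take j u).
Proof.
move=> /goodP H; apply/goodP => i j'.
by rewrite -take_min; exact: H.
Qed.

Lemma bad_count L :
  \sum_(u <- words T L) bad u <= 'C(L, 2 * kL L) * #|T| ^ (L - kL L).
Proof.
set k := kL L.
apply: (@leq_trans (\sum_(u <- words T L) \sum_(m <- words bool L)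
   ((count id m == 2 * k) && (take k (mask m u) == drop k (mask m u))))).
  rewrite big_seq [X in _ <= X]big_seq; apply: leq_sum => u.
  rewrite mem_words => /eqP Hu.
  rewrite /bad Hu; exact: has_le_sum.
rewrite exchange_big /=.
apply: (@leq_trans (\sum_(m <- words bool L) (count id m == 2 * k) * #|T| ^ (L - k))).
  rewrite big_seq [X in _ <= X]big_seq; apply: leq_sum => m.
  rewrite mem_words => /eqP Hm.
  case: eqP => Hc; last by rewrite big1.
  rewrite mul1n /= -Hm; exact: sum_mask_sq.
by rewrite -big_distrl /= count_masks.
Qed.

End Bad.

Section Ros.
Variable T : finType.
Variable N : nat.

Definition Cn n := \sum_(w <- words T n) good N w.
Definition Bn L := \sum_(u <- words T L) bad N u.

Lemma pointwise n (w v : seq T) : size w = n -> size v = 1 ->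
  good N w <= good N (w ++ v) +
     \sum_(0 <= i < n.+1) good N (take i (w ++ v)) * bad N (drop i (w ++ v)).
Proof.
move=> Hw Hv.
case Hg: (good N (w ++ v)); first by case: (good N w).
case Hgw: (good N w) => //; rewrite add0n.
move: Hg => /negbT /allPn [j Hj /allPn [i Hi]]; rewrite negbK => Hb.
have Hs : size (w ++ v) = n.+1 by rewrite size_cat Hw Hv addn1.
move: Hj Hi; rewrite !mem_iota !add0n => /andP [_ Hj] /andP [_ Hi].
have [Hjn|Hjn] := leqP j n.
  move: Hb; rewrite takel_cat ?Hw //.
  by move: Hgw => /goodP H; rewrite (negbTE (H i j)).
have Hj' : j = n.+1 by lia.
move: Hb; rewrite Hj' take_oversize ?Hs // => Hb.
have Hin : i <= n.
  case: (leqP i n) => // Hi'.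
  by move: Hb; rewrite drop_oversize ?Hs ?bad_nil.
apply: leq_trans (sum_ge_mem (fun i => good N (take i (w ++ v)) * bad N (drop i (w ++ v))) (x:=i) _).
  by rewrite Hb takel_cat ?Hw // (good_take i Hgw).
by rewrite mem_index_iota; lia.
Qed.


Lemma split_sum n (F : seq T -> nat) :
  \sum_(u <- words T n.+1) F u =
  \sum_(w <- words T n) \sum_(v <- words T 1) F (w ++ v).
Proof.
rewrite -addn1 -(sum_words_split (fun a b => F (a ++ b))).
by apply: eq_bigr => u _; rewrite cat_take_drop.
Qed.

Lemma rosen_nat n :
  #|T| * Cn n <= Cn n.+1 + \sum_(0 <= i < n.+1) Cn i * Bn (n.+1 - i).
Proof.
have E1 : #|T| * Cn n = \sum_(w <- words T n) \sum_(v <- words T 1) good N w.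
  rewrite /Cn big_distrr; apply: eq_bigr => w _.
  by rewrite sum_words_const expn1.
have E2 : \sum_(0 <= i < n.+1) Cn i * Bn (n.+1 - i) =
   \sum_(u <- words T n.+1) \sum_(0 <= i < n.+1) good N (take i u) * bad N (drop i u).
  rewrite exchange_big.
  rewrite big_seq_cond [X in _ = X]big_seq_cond; apply: eq_bigr => i.
  rewrite mem_index_iota andbT => /andP [_ Hi].
  rewrite /Cn /Bn big_distrl.
  have Hn : n.+1 = i + (n.+1 - i) by lia.
  set l := n.+1 - i in Hn *.
  rewrite Hn (sum_words_split (fun a b => good N a * bad N b)); apply: eq_bigr => u1 _.
  by rewrite big_distrr.
rewrite E1 E2 /Cn split_sum [X in _ <= _ + X]split_sum -big_split.
rewrite big_seq [X in _ <= X]big_seq; apply: leq_sum => w.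
rewrite mem_words => /eqP Hw.
rewrite -big_split big_seq [X in _ <= X]big_seq; apply: leq_sum => v.
rewrite mem_words => /eqP Hv.
exact: pointwise.
Qed.

End Ros.

Section Real.
Variable R : realFieldType.
Local Open Scope ring_scope.

Lemma bern (x : R) m : 0 <= x -> (1 + x) ^+ m * (1 - m%:R * x) <= 1.
Proof.
move=> x0; elim: m => [|m IH]; first by rewrite expr0 mul0r subr0 mulr1.
apply: le_trans IH.
rewrite exprS mulrAC mulrC; apply: ler_wpM2l; first by rewrite exprn_ge0 //; lra.
have m0 : 0 <= m%:R :> R by rewrite ler0n.
rewrite -natr1; nra.
Qed.

Lemma pow_boundR k : (0 < k)%N -> (k.+1 ^ k <= 8 * k ^ k)%N.
Proof.
move=> k0.
rewrite -(ler_nat R) natrM !natrX.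
set x : R := k%:R^-1.
have kR : 0 < k%:R :> R by rewrite ltr0n.
have x0 : 0 <= x by rewrite invr_ge0 ltW.
have -> : k.+1%:R = k%:R * (1 + x) :> R.
  by rewrite mulrDr mulr1 /x mulfV ?gt_eqF // -natr1.
rewrite exprMn mulrC; apply: ler_wpM2r; first by apply: exprn_ge0; exact: ltW.
set m := k./2.
have Hm : (m.*2 <= k <= m.*2.+1)%N.
  by rewrite /m; case/orP: (orbN (odd k)) => Ho; rewrite -{2 4}(odd_double_half k) ?Ho /=; lia.
have Hmx : m%:R * x <= 1/2.
  have kx : k%:R * x = 1 by rewrite /x mulfV ?gt_eqF.
  case/andP: Hm => Hm _.
  have Hm' : m%:R * 2 <= k%:R :> R.
    by rewrite -(ler_nat R) -muln2 natrM in Hm.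
  have : 0 <= (k%:R - m%:R * 2) * x by rewrite mulr_ge0 // subr_ge0.
  lra.
have H2 : (1 + x) ^+ m <= 2.
  have := bern m x0.
  have : 0 <= (1 + x) ^+ m by rewrite exprn_ge0 //; lra.
  nra.
have H1 : 1 + x <= 2.
  have : k%:R^-1 <= 1 :> R by rewrite invf_le1 // ler1n.
  rewrite /x; lra.
apply: (@le_trans _ _ ((1 + x) ^+ (m.*2.+1))).
  by apply: ler_weXn2l; [lra | case/andP: Hm].
rewrite exprS -addnn exprD.
have : 0 <= (1 + x) ^+ m by rewrite exprn_ge0 //; lra.
nra.
Qed.

End Real.

Lemma leq_expr m n e : (m <= n)%N -> (m ^ e <= n ^ e)%N.
Proof. by case: e => [|e] H //; rewrite leq_exp2r. Qed.

Lemma fact_bound j : (j ^ j <= 8 ^ j * j`!)%N.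
Proof.
elim: j => [|j IH] //.
case: j IH => [|j] IH; first by [].
have H := pow_boundR rat (isT : (0 < j.+1)%N).
rewrite expnS factS.
apply: (@leq_trans (j.+2 * (8 * j.+1 ^ j.+1))); first by rewrite leq_mul2l H orbT.
apply: (@leq_trans (j.+2 * (8 * (8 ^ j.+1 * j.+1`!)))).
  by rewrite leq_mul2l leq_mul2l IH !orbT.
rewrite [in X in _ <= X]expnS.
set A := 8 ^ j.+1. set B := j.+1`!.
by apply: eq_leq; ring.
Qed.

Lemma ffact_le n m : (n ^_ m <= n ^ m)%N.
Proof.
elim: m n => [|m IH] n //.
rewrite ffactnS expnS leq_mul2l; apply/orP; right.
apply: leq_trans (IH _) _; apply: leq_expr; exact: leq_pred.
Qed.

Lemma bin_bound L k N : (L <= 2 * N * k)%N -> ('C(L, 2 * k) <= (64 * N ^ 2) ^ k)%N.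
Proof.
move=> HL.
case: k HL => [|k] HL; first by rewrite muln0 bin0.
set K := 2 * k.+1.
have Kf : (0 < K`!)%N by exact: fact_gt0.
rewrite -(leq_pmul2r Kf) bin_ffact.
apply: (@leq_trans (L ^ K)); first exact: ffact_le.
apply: (@leq_trans ((2 * N * k.+1) ^ K)); first exact: leq_expr.
have -> : (2 * N * k.+1 = N * K)%N by rewrite /K; lia.
rewrite expnMn.
have -> : ((64 * N ^ 2) ^ k.+1 = N ^ K * 8 ^ K)%N.
  by rewrite /K expnMn -expnM mulnC !expnM.
by rewrite -mulnA leq_mul2l fact_bound orbT.
Qed.


Section Series.
Variable R : realFieldType.
Local Open Scope ring_scope.
Variable N : nat.
Hypothesis N0 : (0 < N)%N.

Let n : R := N%:R.
Definition rr : R := 1 + (2 * n)^-1.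
Definition zz : R := (64 * N ^ 2)%:R / (4096 * N ^ 4)%:R.

Lemma n_ge1 : 1 <= n.
Proof. by rewrite /n ler1n. Qed.

Lemma rr_ge1 : 1 <= rr.
Proof. have := n_ge1; rewrite /rr => H; rewrite lerDl invr_ge0; lra. Qed.

Lemma rr_pow : rr ^+ (2 * N) <= 4.
Proof.
have x0 : 0 <= (2 * n)^-1 by rewrite invr_ge0; have := n_ge1; lra.
have := bern N x0.
have -> : N%:R * (2 * n)^-1 = 1 / 2 :> R.
  rewrite /n; field; have := n_ge1; rewrite /n; lra.
rewrite -/rr => H.
have H2 : rr ^+ N <= 2.
  have : 0 <= rr ^+ N by rewrite exprn_ge0 //; have := rr_ge1; lra.
  lra.
rewrite mulnC exprM expr2.
have : 0 <= rr ^+ N by rewrite exprn_ge0 //; have := rr_ge1; lra.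
nra.
Qed.

Lemma zz_eq : zz = (64 * n ^+ 2)^-1.
Proof.
rewrite /zz /n !natrM.
have := n_ge1; rewrite /n => H.
field; lra.
Qed.

Lemma geom_bound (y : R) T : 0 <= y <= 1/2 ->
  \sum_(0 <= t < T) y ^+ t.+1 <= 2 * y - 2 * y ^+ T.+1.
Proof.
move=> /andP [y0 y1].
elim: T => [|T IH]; first by rewrite big_nil expr1; lra.
rewrite big_nat_recr //=.
have : y ^+ T.+2 = y * y ^+ T.+1 by rewrite exprS.
have : 0 <= y ^+ T.+1 by rewrite exprn_ge0.
nra.
Qed.


Lemma block_sum (y : R) d T : (0 < d)%N ->
  \sum_(0 <= j < d * T) y ^+ (j %/ d).+1 = (\sum_(0 <= t < T) y ^+ t.+1) *+ d.
Proof.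
move=> d0; elim: T => [|T IH]; first by rewrite muln0 !big_nil mul0rn.
rewrite mulnS addnC (@big_cat_nat _ _ _ (d * T)) //=; last by rewrite leq_addr.
rewrite IH big_nat_recr //= mulrnDl; congr (_ + _).
rewrite (@eq_big_nat _ _ _ _ _ _ (fun _ => y ^+ T.+1)); last first.
  move=> j /andP [H1 H2].
  have -> : j = (T * d + (j - d * T))%N by lia.
  rewrite divnMDl // divn_small //; first by rewrite addn0.
  lia.
by rewrite sumr_const_nat addKn.
Qed.

Lemma sum_extend (f : nat -> R) M M' : (M <= M')%N -> (forall j, 0 <= f j) ->
  \sum_(0 <= j < M) f j <= \sum_(0 <= j < M') f j.
Proof.
move=> HM f0; rewrite (@big_cat_nat _ _ _ M 0 M') //= lerDl.
by apply: sumr_ge0 => j _.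
Qed.

Lemma series_bound M :
  \sum_(0 <= j < M) rr ^+ j * zz ^+ (kL N j.+1) <= 1 - rr^-1.
Proof.
have zz0 : 0 <= zz by rewrite zz_eq invr_ge0; have := n_ge1; nra.
have d0 : (0 < 2 * N)%N by lia.
apply: (@le_trans _ _ (\sum_(0 <= j < M) (4 * zz) ^+ (j %/ (2 * N)).+1)).
  apply: ler_sum => j _; rewrite /kL /= [X in _ <= X]exprMn.
  apply: ler_wpM2r; first exact: exprn_ge0.
  apply: (@le_trans _ _ (rr ^+ (2 * N * (j %/ (2 * N)).+1))).
    apply: ler_weXn2l; first exact: rr_ge1.
    by have := ltn_ceil j d0; rewrite mulnC; lia.
  rewrite exprM; apply: lerXn2r; rewrite ?nnegrE ?rr_pow //.
  by apply: exprn_ge0; exact: le_trans ler01 rr_ge1.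
apply: (@le_trans _ _ (\sum_(0 <= j < 2 * N * M) (4 * zz) ^+ (j %/ (2 * N)).+1)).
  apply: sum_extend; first exact: leq_pmull.
  by move=> j; apply: exprn_ge0; lra.
rewrite block_sum //.
have y1 : 0 <= 4 * zz <= 1/2.
  have := n_ge1 => H.
  have H' : 64 <= 64 * n ^+ 2 by rewrite expr2; nra.
  have p : 0 < 64 * n ^+ 2 by lra.
  rewrite zz_eq; apply/andP; split.
    by rewrite mulr_ge0 // invr_ge0 ltW.
  change (4 / (64 * n ^+ 2) <= 1/2); rewrite ler_pdivrMr //; lra.
have H := n_ge1.
rewrite -mulr_natr.
apply: (@le_trans _ _ ((2 * (4 * zz)) * (2 * N)%:R)).
  apply: ler_wpM2r; first by rewrite ler0n.
  apply: le_trans (geom_bound M y1) _.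
  have : 0 <= (4 * zz) ^+ M.+1 by apply: exprn_ge0; case/andP: y1.
  lra.
have E : 1 - rr^-1 = (2 * n + 1)^-1.
  rewrite /rr; field; apply/andP; split; lra.
have E2 : 2 * (4 * zz) * (2 * N)%:R = (4 * n)^-1.
  rewrite zz_eq natrM -/n; field; lra.
rewrite E E2 lef_pV2 ?posrE; lra.
Qed.
End Series.

Section Main.
Variable R : realFieldType.
Local Open Scope ring_scope.
Variable N : nat.
Hypothesis N0 : (0 < N)%N.
Variable T : finType.
Hypothesis cardT : #|T| = (4096 * N ^ 4)%N.

Let q : R := (4096 * N ^ 4)%:R.
Let C k : R := (Cn T N k)%:R.
Let B L : R := (Bn T N L)%:R.
Let beta : R := q * (rr R N)^-1.

Lemma q_gt0 : 0 < q.
Proof. by rewrite /q ltr0n; lia. Qed.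

Lemma kL_le L : (0 < L)%N -> (kL N L <= L)%N.
Proof.
move=> L0; rewrite /kL.
have := leq_div L.-1 (2 * N); lia.
Qed.

Lemma L_le L : (L <= 2 * N * kL N L)%N.
Proof.
rewrite /kL.
have d0 : (0 < 2 * N)%N by lia.
have := ltn_ceil L.-1 d0; rewrite mulnC; lia.
Qed.

Lemma B_bound L : B L <= q ^+ L * (zz R N) ^+ (kL N L).
Proof.
have zz0 : 0 <= zz R N by rewrite /zz divr_ge0 ?ler0n.
case: L => [|L].
  rewrite /B /Bn /= big_cons big_nil /= expr0 mul1r; exact: exprn_ge0.
set k := kL N L.+1.
have Hk : (k <= L.+1)%N by exact: kL_le.
have H1 := bad_count T N L.+1.
have H2 := bin_bound (L_le L.+1).
rewrite cardT -/k in H1 H2.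
apply: (@le_trans _ _ (((64 * N ^ 2) ^ k) * (4096 * N ^ 4) ^ (L.+1 - k))%:R).
  rewrite /B ler_nat; apply: leq_trans H1 _.
  by rewrite leq_mul2r H2 orbT.
rewrite natrM !natrX /zz -/q.
have -> : q ^+ L.+1 = q ^+ (L.+1 - k) * q ^+ k by rewrite -exprD subnK.
rewrite exprMn exprVn.
have qk : q ^+ k != 0 by rewrite expf_neq0 // gt_eqF // q_gt0.
have q0 : q != 0 by rewrite gt_eqF // q_gt0.
rewrite [X in _ <= X](_ : _ = (64 * N ^ 2)%:R ^+ k * q ^+ (L.+1 - k)) //.
by field.
Qed.


Lemma rr_gt0 : 0 < rr R N.
Proof. have := rr_ge1 R N0; lra. Qed.

Lemma beta_gt0 : 0 < beta.
Proof. by rewrite /beta mulr_gt0 ?q_gt0 ?invr_gt0 ?rr_gt0. Qed.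

Lemma C_ge0 k : 0 <= C k.
Proof. by rewrite /C ler0n. Qed.

Lemma key n : (forall m, (m < n)%N -> beta * C m <= C m.+1) ->
  beta * C n <= C n.+1.
Proof.
move=> IH.
have chain : forall d i, (i + d = n)%N -> beta ^+ d * C i <= C n.
  elim=> [|d IHd] i Hi; first by rewrite expr0 mul1r addn0 in Hi *; rewrite Hi.
  rewrite exprS -mulrA mulrCA.
  apply: le_trans (IHd i.+1 _); last by rewrite addSnnS.
  apply: ler_wpM2l; first by apply: exprn_ge0; exact: ltW beta_gt0.
  by apply: IH; lia.
have Hn : q * C n <= C n.+1 +
    \sum_(0 <= i < n.+1) ((Cn T N i)%:R * (Bn T N (n.+1 - i))%:R : R).
  have := rosen_nat T N n; rewrite cardT -(ler_nat R) natrD natrM natr_sum.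
  by under eq_bigr do rewrite natrM.
set S := \sum_(0 <= j < n.+1) rr R N ^+ j * zz R N ^+ (kL N j.+1).
have HS := series_bound R N0 n.+1; rewrite -/S in HS.
have Hsum : \sum_(0 <= i < n.+1) ((Cn T N i)%:R * (Bn T N (n.+1 - i))%:R : R)
   <= q * C n * S.
  rewrite /S big_distrr /=.
  have -> : \sum_(0 <= j < n.+1) q * C n * (rr R N ^+ j * zz R N ^+ (kL N j.+1))
    = \sum_(0 <= i < n.+1) q * C n * (rr R N ^+ (n - i) * zz R N ^+ (kL N (n - i).+1)).
    rewrite [RHS]big_nat_rev /=; apply: eq_big_nat => i /andP [_ Hi].
    by rewrite add0n subSS subKn.
  apply: ler_sum_nat => i /andP [_ Hi].
  rewrite subSn //.
  set d := (n - i)%N; set k := kL N d.+1.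
  have Hc : beta ^+ d * C i <= C n by apply: chain; rewrite /d; lia.
  apply: le_trans (ler_wpM2l (C_ge0 i) (B_bound d.+1)) _; rewrite -/k.
  have E : q ^+ d.+1 = q * (beta ^+ d * rr R N ^+ d).
    by rewrite -exprMn /beta divrK ?unitf_gt0 ?rr_gt0 // exprS.
  rewrite E.
  have nn : 0 <= q * rr R N ^+ d * zz R N ^+ k.
    have z0 : 0 <= zz R N by rewrite /zz divr_ge0 ?ler0n.
    have r0 := ltW rr_gt0; have q0 := ltW q_gt0.
    by rewrite !mulr_ge0 // exprn_ge0.
  have P := ler_wpM2l nn Hc.
  change ((Cn T N i)%:R) with (C i).
  lra.
have := C_ge0 n; have := q_gt0; rewrite /beta => q0 c0.
have P := ler_wpM2l (mulr_ge0 (ltW q0) c0) HS.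
lra.
Qed.


Lemma all_steps n0 : beta * C n0 <= C n0.+1.
Proof.
have : forall n m, (m <= n)%N -> beta * C m <= C m.+1.
  elim=> [|n' IHn] m Hm.
    have -> : m = 0%N by lia.
    by apply: key => m'; rewrite ltn0.
  apply: key => m' Hm'; apply: IHn; lia.
move=> H; apply: (H n0 n0); exact: leqnn.
Qed.

Lemma Cn_pos n : (0 < Cn T N n)%N.
Proof.
rewrite -(ltr0n R) -/(C n).
elim: n => [|n IH].
  by rewrite /C /Cn /= big_cons big_nil.
apply: lt_le_trans (all_steps n); exact: mulr_gt0 beta_gt0 IH.
Qed.

End Main.

Section ED.
Variable T : eqType.

Lemma del_subseq (c u : seq T) i : subseq c u ->
  exists c', [/\ subseq c' c, subseq c' (take i u ++ drop i.+1 u) & size c <= (size c').+1].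
Proof.
elim: u c i => [|x u IH] c i.
  by rewrite subseq0 => /eqP ->; exists [::]; rewrite !sub0seq.
case: i => [|i].
  rewrite /= drop0.
  case: c => [|y c] /=.
    by move=> _; exists [::]; rewrite !sub0seq.
  case: eqP => [->|_] H.
    by exists c; split => //; exact: subseq_cons.
  by exists (y :: c); split => //; rewrite eqxx subseq_refl.
case: c => [|y c] /=.
  by move=> _; exists [::]; split; rewrite ?sub0seq.
case: eqP => [->|_] H.
  have [c' [H1 H2 H3]] := IH c i H.
  by exists (x :: c'); rewrite /= eqxx H1 H2.
have [c' [H1 H2 H3]] := IH (y :: c) i H.
exists c'; split => //.
  by apply: subseq_trans H2 (subseq_cons _ _).
Qed.

Lemma ins_subseq (u : seq T) i a : subseq u (take i u ++ a :: drop i u).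
Proof.
rewrite -{1}(cat_take_drop i u) cat_subseq ?subseq_refl //.
exact: subseq_cons.
Qed.

Lemma ops_lcs (ops : seq (edit_op T)) (s u : seq T) c k :
  subseq c s -> subseq c u -> size s + size u <= 2 * size c + k ->
  exists c', [/\ subseq c' s, subseq c' (apply_ops ops u) &
               size s + size (apply_ops ops u) <= 2 * size c' + (k + size ops)].
Proof.
elim: ops u c k => [|o ops IH] u c k Hs Hu Hk.
  by exists c; rewrite addn0.
rewrite /apply_ops /= -/(apply_ops ops (apply_op o u)).
case: o => [i a|i] /=.
  have := IH (take i u ++ a :: drop i u) c k.+1 Hs.
  case.
  - exact: subseq_trans Hu (ins_subseq u i a).
  - rewrite size_cat /= size_take size_drop.
    case: ltnP => Hi; lia.
  move=> c' [H1 H2 H3]; exists c'; split => //; lia.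
have [Hiu|Hiu] := leqP (size u) i.
  rewrite take_oversize // drop_oversize; last by lia.
  rewrite cats0.
  have [c' [H1 H2 H3]] := IH u c k.+1 Hs Hu (ltac:(lia)).
  by exists c'; split => //; lia.
have [c' [H1 H2 H3]] := del_subseq i Hu.
have := IH (take i u ++ drop i.+1 u) c' k.+1 (subseq_trans H1 Hs) H2.
case.
- rewrite size_cat size_take size_drop.
  case: ltnP => Hi; lia.
move=> c'' [G1 G2 G3]; exists c''; split => //; lia.
Qed.

Lemma ED_lcs (s t : seq T) : exists c, [/\ subseq c s, subseq c t &
  size s + size t <= 2 * size c + ED s t].
Proof.
rewrite /ED; case: ex_minnP => m /asboolP [ops [Hsz Happ]] _.
have [c' [H1 H2 H3]] := ops_lcs ops (subseq_refl s) (subseq_refl s) (k := 0) (ltac:(lia)).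
by exists c'; rewrite -Happ -Hsz; split => //; lia.
Qed.

End ED.

Lemma trim_mask (T : Type) (m : bitseq) (s : seq T) k :
  size m = size s -> k <= count id m ->
  exists m', [/\ size m' = size m, count id m' = k & mask m' s = take k (mask m s)].
Proof.
elim: m s k => [|b m IH] [|x s] k //=.
  by rewrite leqn0 => _ /eqP ->; exists [::].
move=> [Hs]; case: b => /= Hk.
  case: k Hk => [|k] Hk.
    exists (nseq (size m).+1 false); split; rewrite ?size_nseq //.
      by rewrite count_nseq mul0n.
    by rewrite mask_false.
  have [m1 [H1 H2 H3]] := IH s k Hs (ltac:(lia)).
  by exists (true :: m1); rewrite /= H1 H2 H3.
have [m1 [H1 H2 H3]] := IH s k Hs Hk.
by exists (false :: m1); rewrite /= H1 H2 H3.
Qed.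

Lemma lcs_bad (T : finType) (N : nat) (x y c : seq T) : (0 < N)%N ->
  subseq c x -> subseq c y -> (0 < size c)%N ->
  (size (x ++ y) <= 2 * N * size c)%N -> bad N (x ++ y).
Proof.
move=> N0 /subseqP [m1 Hm1 Ec1] /subseqP [m2 Hm2 Ec2] c0 HL.
set L := size (x ++ y).
set k := kL N L.
have Hk : (k <= size c)%N.
  rewrite /k /kL ltn_divLR; last by lia.
  rewrite -/L; lia.
have Hc1 : size c = count id m1 by rewrite Ec1 size_mask.
have Hc2 : size c = count id m2 by rewrite Ec2 size_mask.
have [m1' [S1 C1 M1]] := trim_mask Hm1 (leq_trans Hk (eq_leq Hc1)).
have [m2' [S2 C2 M2]] := trim_mask Hm2 (leq_trans Hk (eq_leq Hc2)).
apply/hasP; exists (m1' ++ m2').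
  by rewrite mem_words !size_cat S1 S2 Hm1 Hm2.
rewrite -/L -/k count_cat C1 C2 addnn -muln2 mulnC eqxx /=.
rewrite mask_cat; last by rewrite S1.
rewrite M1 M2 -Ec1 -Ec2.
have Hsz : size (take k c) = k by rewrite size_takel.
by rewrite take_size_cat // drop_size_cat.
Qed.

Section Konig.
Variable T : finType.
Variable g : seq T -> bool.
Hypothesis Hpre : forall w v, g (w ++ v) -> g w.
Hypothesis Hex : forall n, exists w, size w = n /\ g w.

Definition ext (w : seq T) := forall n, exists v, size v = n /\ g (w ++ v).

Lemma no_ext_up w n : (forall v, size v = n -> ~~ g (w ++ v)) ->
  forall n', n <= n' -> forall v, size v = n' -> ~~ g (w ++ v).
Proof.
move=> H n' Hn v Hv; apply/negP => Hg.
have := H (take n v); rewrite size_takel ?Hv // => /(_ erefl) /negP; apply.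
apply: (Hpre (v := drop n v)); by rewrite -catA cat_take_drop.
Qed.

Lemma ext_step w : ext w -> exists a, ext (rcons w a).
Proof.
move=> Hw; apply: contrapT => Hno.
have Hall : forall a, exists n, forall v, size v = n -> ~~ g (rcons w a ++ v).
  move=> a; have : ~ ext (rcons w a) by move=> He; apply: Hno; exists a.
  move=> /existsNP [n Hn]; exists n => v Hv; apply/negP => Hg.
  by apply: Hn; exists v.
have : forall l : seq T, exists M, forall a, a \in l ->
   forall v, size v = M -> ~~ g (rcons w a ++ v).
  elim=> [|a l [M HM]]; first by exists 0.
  have [n Hn] := Hall a.
  exists (maxn n M) => b; rewrite inE => /orP [/eqP ->|Hb] v Hv.
    by apply: (no_ext_up Hn (n' := maxn n M)) => //; rewrite leq_maxl.
  by apply: (no_ext_up (HM b Hb) (n' := maxn n M)) => //; rewrite leq_maxr.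
move=> /(_ (enum T)) [M HM].
have [[|a v] [Hv Hg]] := Hw M.+1 => //.
have := HM a (mem_enum _ a) v; rewrite -cats1 -catA /= => /(_ (ltac:(by case: Hv))).
by rewrite Hg.
Qed.


Variable a0 : T.

Definition nxt (w : seq T) :=
  if [pick a | `[< ext (rcons w a) >] ] is Some a then rcons w a else rcons w a0.

Lemma nxt_ok w : ext w -> ext (nxt w) /\ exists a, nxt w = rcons w a.
Proof.
move=> Hw; rewrite /nxt; case: pickP => [a /asboolP Ha|Hn].
  by split => //; exists a.
exfalso; have [a Ha] := ext_step Hw.
by have := Hn a; move/asboolP: Ha => ->.
Qed.

Definition pref n := iter n nxt [::].

Lemma pref_ok n : ext (pref n) /\ size (pref n) = n.
Proof.
elim: n => [|n [IH1 IH2]].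
  split => // m; have [w [Hw Hg]] := Hex m; by exists w.
have [H1 [a H2]] := nxt_ok IH1.
by rewrite /pref /= -/(pref n) H2 size_rcons IH2; split => //; rewrite -H2.
Qed.

Definition Sinf m := nth a0 (pref m.+1) m.

Lemma map_Sinf n : [seq Sinf m | m <- iota 0 n] = pref n.
Proof.
elim: n => [|n IH] //.
have [H1 [a H2]] := nxt_ok (pref_ok n).1.
rewrite -addn1 iotaD map_cat IH /= add0n.
have E : pref n.+1 = rcons (pref n) a by rewrite /pref /= -/(pref n) H2.
by rewrite /Sinf E nth_rcons (pref_ok n).2 ltnn eqxx addn1 E cats1.
Qed.

Lemma konig : forall n, g [seq Sinf m | m <- iota 0 n].
Proof.
move=> n; rewrite map_Sinf.
have [w [Hw Hg]] := (pref_ok n).1 0.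
by move: Hw Hg; case: w => // _; rewrite cats0.
Qed.

End Konig.

Local Open Scope ring_scope.

Lemma sum_gt0_has (I : eqType) (s : seq I) (p : pred I) :
  (0 < \sum_(x <- s) p x)%N -> exists2 x, x \in s & p x.
Proof.
elim: s => [|x s IH]; first by rewrite big_nil.
rewrite big_cons; case Hp: (p x) => /= H.
  by exists x; rewrite ?inE ?eqxx.
have [y Hy Hpy] := IH H; exists y => //; by rewrite inE Hy orbT.
Qed.

Unset Implicit Arguments.
Theorem lemma20 (R : realType) :
  exists c1 c2 : R, 0 < c1 /\ 0 < c2 /\
    forall eps : R, 0 < eps < 1 ->
      exists q : nat,
        c1 / eps ^+ 4 <= q%:R <= c2 / eps ^+ 4 /\
        exists S : nat -> 'I_q, inf_sync_string eps S.
Proof.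
exists (2 ^+ 12), (2 ^+ 16); split; first by rewrite exprn_gt0.
split; first by rewrite exprn_gt0.
move=> eps /andP [e0 e1].
set N := (Num.trunc (eps^-1)).+1.
have N0 : (0 < N)%N by [].
have ie0 : 0 <= eps^-1 by rewrite invr_ge0 ltW.
have HN1 : eps^-1 < N%:R by exact: truncnS_gt.
have HN2 : N%:R <= eps^-1 + 1.
  by rewrite /N -natr1 lerD2r truncn_le.
have ie1 : 1 <= eps^-1 by rewrite invf_ge1 // ltW.
have Ne : 1 < eps * N%:R.
  have H := HN1; rewrite -(ltr_pM2l e0) mulfV ?gt_eqF // in H.
set q := (4096 * N ^ 4)%N.
have q0 : (0 < q)%N by rewrite /q muln_gt0 expn_gt0 N0.
exists q; split.
  have E4 : forall c : R, c / eps ^+ 4 = c * (eps^-1) ^+ 4 by move=> c; rewrite exprVn.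
  rewrite !E4 /q natrM natrX; apply/andP; split.
    have -> : 2 ^+ 12 = 4096 :> R by rewrite -natrX.
    apply: ler_wpM2l; first by rewrite ler0n.
    by apply: lerXn2r; rewrite ?nnegrE // ?ler0n //; exact: ltW.
  have -> : 2 ^+ 16 = 4096 * 2 ^+ 4 :> R.
    have E : 4096 = 2 ^+ 12 :> R by rewrite -natrX.
    by rewrite E -exprD.

  rewrite -mulrA -exprMn; apply: ler_wpM2l; first by rewrite ler0n.
  by apply: lerXn2r; rewrite ?nnegrE ?ler0n //; lra.
pose T := 'I_q.
have cardT : #|T| = (4096 * N ^ 4)%N by rewrite card_ord.
pose a0 : T := Ordinal q0.
have Hpre : forall w v : seq T, good N (w ++ v) -> good N w.
  move=> w v /(good_take (size w)); by rewrite take_size_cat.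
have Hex : forall n, exists w : seq T, size w = n /\ good N w.
  move=> n; have := Cn_pos R N0 cardT n; rewrite /Cn => /sum_gt0_has [w Hw Hg].
  by exists w; split => //; apply/eqP; rewrite -mem_words.
pose S := Sinf (good N) a0.
have HS := konig Hpre Hex a0.
exists S => i j k i0 ij jk.
rewrite ltNge; apply/negP => Hle.
set x := substr S i j; set y := substr S j k.
have [c [Hcx Hcy Hsz]] := ED_lcs x y.
have Hxy : x ++ y = drop i (take k [seq S m | m <- iota 0 k]).
  rewrite take_oversize ?size_map ?size_iota // -map_drop drop_iota add0n.
  rewrite /x /y /substr -map_cat; congr (map _ _).
  rewrite -[X in iota X (k - j)](subnKC (ltnW ij)) -iotaD; congr iota; lia.
have Hsx : (size (x ++ y) = k - i)%N.
  by rewrite size_cat /x /y /substr !size_map !size_iota; lia.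
rewrite -size_cat Hsx in Hsz.
have HL : ((k - i) < 2 * N * size c)%N.
  rewrite -(ltr_nat R) natrM natrM.
  rewrite -(ler_nat R) natrD natrM in Hsz.
  have L0 : 0 < (k - i)%:R :> R by rewrite ltr0n subn_gt0; lia.
  set L := (k - i)%:R in Hsz Hle L0 *.
  set cc := (size c)%:R in Hsz *.
  set E := (ED x y)%:R in Hsz Hle.
  have A : eps * L <= 2 * cc by lra.
  have B : N%:R * (eps * L) <= N%:R * (2 * cc) by rewrite ler_wpM2l ?ler0n.
  have C : L < eps * N%:R * L by rewrite -{1}(mul1r L) ltr_pM2r.
  lra.
have c0 : (0 < size c)%N.
  by case: (size c) HL => //; rewrite muln0.
have Hle2 : (size (x ++ y) <= 2 * N * size c)%N by rewrite Hsx; exact: ltnW.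
have Hb := lcs_bad N0 Hcx Hcy c0 Hle2.
move/goodP: (HS k) => /(_ i k); by rewrite -Hxy Hb.
Qed.
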